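(* Let $p$ be a prime and let $G$ be a finite $p$-group. If every connected component of $\mathcal{P}^*(G)$ is a clique, then $\pi(\kappa(G))=\{p\}$.
   Context: For a finite group $G$, the power graph $\mathcal{P}(G)$ is the simple undirected graph with vertex set $G$, two distinct vertices $x,y$ being adjacent iff $\langle x\rangle\subseteq\langle y\rangle$ or $\langle y\rangle\subseteq\langle x\rangle$; $\mathcal{P}^*(G)$ is obtained from $\mathcal{P}(G)$ by deleting the vertex $1$. $\kappa(G)$ is the number of spanning trees of $\mathcal{P}(G)$, and for a positive integer $n$, $\pi(n)$ is the set of prime divisors of $n$.
   Formalization: G is also assumed to contain an element of order greater than 2. The statement above fails without it. *)

(* Defs.v *)
From mathcomp Require Import all_boot all_order all_fingroup all_solvable.
Set Implicit Arguments. Unset Strict Implicit. Unset Printing Implicit Defensive.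
Local Open Scope group_scope.

Section PowerGraph.
Variable gT : finGroupType.

Definition pg_adj (x y : gT) : bool :=
  (x != y) && ((<[x]> \subset <[y]>) || (<[y]> \subset <[x]>)).

Definition pg_edges (G : {set gT}) : {set {set gT}} :=
  [set [set x; y] | x in G, y in G & pg_adj x y].

Definition edge_rel (T : {set {set gT}}) : rel gT :=
  fun u v => [set u; v] \in T.

(* the graph with edge set T has no cycle (cycle = closed walk through >= 3
   pairwise distinct vertices; such a cycle has at most #|gT| vertices) *)
Definition acyclic (T : {set {set gT}}) : bool :=
  [forall n : 'I_#|gT|.+1, forall s : (nat_of_ord n).-tuple gT,
     (3 <= n)%N ==> ~~ ucycleb (edge_rel T) s].

Definition pg_spanning_tree (G : {set gT}) (T : {set {set gT}}) : bool :=
  [&& T \subset pg_edges G,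
      [forall x in G, forall y in G, connect (edge_rel T) x y]
    & acyclic T].

Definition kappa (G : {set gT}) : nat :=
  #|[set T : {set {set gT}} | pg_spanning_tree G T]|.

Definition pgstar_adj (G : {set gT}) : rel gT :=
  fun x y => [&& x \in G^#, y \in G^# & pg_adj x y].

Definition components_are_cliques (G : {set gT}) : Prop :=
  forall x y, x \in G^# -> y \in G^# -> x != y ->
    connect (pgstar_adj G) x y -> pg_adj x y.

End PowerGraph.

(* Main.v *)
Require Import Defs.
From mathcomp Require Import all_boot all_order all_fingroup all_solvable.
From mathcomp Require Import all_algebra zify ring.
Set Implicit Arguments. Unset Strict Implicit. Unset Printing Implicit Defensive.

Definition Nf m k := if m is 0 then 1 else k * (m + k) ^ m.-1.

Lemma Nf_rec m k : 0 < m ->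
  \sum_(i < m) 'C(m, i.+1) * k ^ i.+1 * Nf (m - i.+1) i.+1 = Nf m k.
Proof.
move=> m0; apply/eqP; rewrite -(eqn_pmul2l m0); apply/eqP.
rewrite big_distrr /=.
have -> : \sum_(i < m) m * ('C(m, i.+1) * k ^ i.+1 * Nf (m - i.+1) i.+1)
   = \sum_(i < m) m * k * ('C(m.-1, i) * (m ^ (m.-1 - i) * k ^ i)).
  apply: eq_bigr => [[i /= lti]] _.
  have e1 : 'C(m, i.+1) * i.+1 = m * 'C(m.-1, i) by rewrite mul_bin_diag mulnC.
  case: (ltnP i.+1 m) => him.
    have [e He] : exists e, m - i.+1 = e.+1 by exists (m - i.+1).-1; lia.
    have -> : m.-1 - i = e.+1 by lia.
    rewrite He /=.
    have -> : e.+1 + i.+1 = m by lia.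
    rewrite !expnS.
    move: e1; set C := 'C(m, i.+1); set D := 'C(m.-1, i); set ki := k ^ i; set me := m ^ e.
    move=> e1.
    have -> : m * (C * (k * ki) * (i.+1 * me)) = m * (C * i.+1) * k * ki * me by ring.
    rewrite e1; ring.
  have ei : i = m.-1 by lia.
  have -> : m - i.+1 = 0 by lia.
  rewrite /= ei subnn expn0 muln1 expnS.
  have -> : m = m.-1.+1 by lia.
  rewrite /= !binn; lia.
rewrite -big_distrr /=.
case: m m0 => // m _ /=.
rewrite -expnDn addSn addnC; ring.
Qed.

Section AFcount.
Variable T : finType.
Implicit Types (A R S : {set T}) (f g h : {ffun T -> T}).

Lemma fconnect_iterP (f : T -> T) x y :
  reflect (exists n, iter n f x = y) (fconnect f x y).
Proof.
apply: (iffP idP) => [/iter_findex e | [n <-]]; last exact: fconnect_iter.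
by exists (findex f x y).
Qed.

Lemma iter_agree (f g : T -> T) x n :
  (forall i, i < n -> f (iter i g x) = g (iter i g x)) -> iter n f x = iter n g x.
Proof.
elim: n => // n IH H /=; rewrite IH => [|i lt]; last by apply: H; lia.
by apply: H.
Qed.

Lemma first_hit (f : T -> T) (P : pred T) x n : P (iter n f x) ->
  exists2 m, P (iter m f x) & forall i, i < m -> ~~ P (iter i f x).
Proof.
move=> Pn; have ex : exists n, P (iter n f x) by exists n.
case: (ex_minnP ex) => m Pm mmin; exists m => // i lti; apply/negP => Pi.
by have := mmin _ Pi; lia.
Qed.

Definition reachS f R x := [exists y in R, fconnect f x y].

Definition AF A R := [set f : {ffun T -> T} |
  [forall x, if x \in A then (f x \in A :|: R) && reachS f R x else f x == x]].

Lemma AFP A R f : (f \in AF A R) -> (forall x, if x \in A then (f x \in A :|: R) && reachS f R x else f x == x).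
Proof. by rewrite inE => /forallP. Qed.
Lemma AFI A R f : (forall x, if x \in A then (f x \in A :|: R) && reachS f R x else f x == x) -> (f \in AF A R).
Proof. by move=> H; rewrite inE; apply/forallP. Qed.

Definition fib A R f := [set x in A | f x \in R].

Definition comb S g h := [ffun x => if x \in S then g x else h x].

Lemma AF0 R : #|AF set0 R| = 1.
Proof.
apply/eqP/cards1P; exists [ffun x => x]; apply/setP => f; rewrite !inE.
apply/idP/eqP => [/forallP H | ->]; last by apply/forallP => x; rewrite inE ffunE.
by apply/ffunP => x; rewrite ffunE; move: (H x); rewrite inE => /eqP.
Qed.

Lemma AF_R0 A : A != set0 -> #|AF A set0| = 0.
Proof.
case/set0Pn => x xA; apply: eq_card0 => f; apply/negP => /AFP /(_ x).
by rewrite xA => /andP[_ /existsP [y]]; rewrite inE.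
Qed.

Lemma AF_iterA A R f x n : [disjoint A & R] -> f \in AF A R -> x \in A ->
  (forall i, i < n -> f (iter i f x) \notin R) -> iter n f x \in A.
Proof.
move=> dAR /AFP H xA; elim: n => // n IH Hi.
have iA : iter n f x \in A by apply: IH => i lt; apply: Hi; lia.
move: (H (iter n f x)); rewrite iA => /andP[]; rewrite inE => /orP[] // fR _.
by move: (Hi n (ltnSn n)); rewrite /= fR.
Qed.

Lemma fib_nonempty A R f : [disjoint A & R] -> f \in AF A R -> A != set0 ->
  fib A R f != set0.
Proof.
move=> dAR fAF /set0Pn[x xA]; apply/negP => /eqP f0.
have := fAF => /AFP /(_ x); rewrite xA => /andP[_ /existsP[y /andP[yR /fconnect_iterP[n en]]]].
have : iter n f x \in A.
  elim: n {en} => // n IH /=.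
  have := fAF => /AFP /(_ (iter n f x)); rewrite IH => /andP[].
  rewrite inE => /orP[] // fR _.
  have : iter n f x \in fib A R f by rewrite inE IH fR.
  by rewrite f0 inE.
rewrite en => yA.
by rewrite (disjointFr dAR yA) in yR.
Qed.

Lemma comb_AF A R S (y0 : T) g h : [disjoint A & R] -> S \subset A ->
  g \in pffun_on y0 S R -> h \in AF (A :\: S) S ->
  comb S g h \in AF A R /\ fib A R (comb S g h) = S.
Proof.
move=> dAR sA /pffun_onP[/supportP gsup gim] hAF.
have gR x : x \in S -> g x \in R by move=> xS; apply: gim; apply: image_f.
have hP := AFP hAF.
have hA x : x \in A :\: S -> h x \in A.
  move=> xAS; move: (hP x); rewrite xAS => /andP[]; rewrite !inE => /orP[/andP[] //|].
  by move/(subsetP sA).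
split.
  apply: AFI => x; rewrite ffunE; have [xS|xS] := boolP (x \in S).
    rewrite (subsetP sA x xS) inE (gR x xS) orbT /=.
    by apply/existsP; exists (g x); rewrite gR //=; have := fconnect1 (comb S g h) x; rewrite ffunE xS.
  case: ifPn => xA.
    have xAS : x \in A :\: S by rewrite inE xS xA.
    rewrite inE (hA x xAS) /=.
    move: (hP x); rewrite xAS => /andP[_ /existsP[s /andP[sS /fconnect_iterP[n en]]]].
    have hit : iter n h x \in S by rewrite en.
    have [m Pm mmin] := @first_hit h (fun z => z \in S) x n hit.
    apply/existsP; exists (g (iter m h x)); rewrite gR //=.
    apply/fconnect_iterP; exists m.+1; rewrite iterS.
    rewrite (@iter_agree _ h); last by move=> i /mmin ni; rewrite ffunE (negPf ni).
    by rewrite ffunE Pm.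
  by have := hP x; rewrite inE (negPf xS) (negPf xA).
apply/setP => x; rewrite !inE ffunE; case: ifPn => xS.
  by rewrite (subsetP sA x xS) gR.
case xA: (x \in A) => //=; have xAS : x \in A :\: S by rewrite inE xS xA.
by rewrite (disjointFr dAR (hA x xAS)).
Qed.

Lemma AF_split A R S (y0 : T) f : [disjoint A & R] -> S \subset A ->
  f \in AF A R -> fib A R f = S ->
  [/\ [ffun x => if x \in S then f x else y0] \in pffun_on y0 S R,
      [ffun x => if x \in S then x else f x] \in AF (A :\: S) S &
      comb S [ffun x => if x \in S then f x else y0] [ffun x => if x \in S then x else f x] = f].
Proof.
move=> dAR sA fAF fS; have fP := AFP fAF.
have fibP x : x \in A -> (f x \in R) = (x \in S) by move=> xA; rewrite -fS inE xA.
split.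
- apply/pffun_onP; split.
    by apply/supportP => x xS; rewrite ffunE (negPf xS).
  by move=> _ /imageP[x xS ->]; rewrite ffunE xS fibP ?(subsetP sA).
- apply: AFI => x; rewrite ffunE; case: ifPn => [|xAS].
    rewrite inE => /andP[xS xA]; rewrite (negPf xS).
    move: (fP x); rewrite xA => /andP[]; rewrite inE => /orP[] fxA; last by rewrite fibP // (negPf xS) in fxA.
    move=> /existsP[y /andP[yR /fconnect_iterP[n en]]].
    have hit : iter n f x \in R by rewrite en.
    have [m Pm mmin] := @first_hit f (fun z => z \in R) x n hit.
    case: m Pm mmin => [|k] Pm mmin; first by rewrite /= (disjointFr dAR xA) in Pm.
    have itA i : i <= k -> iter i f x \in A.
      move=> ik; apply: (AF_iterA dAR fAF xA) => j ji; rewrite -iterS; apply: mmin; lia.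
    have kS : iter k f x \in S by rewrite -fibP ?itA.
    apply/andP; split.
      by rewrite !inE fxA andbT orbC; case: (f x \in S).
    apply/existsP; exists (iter k f x); rewrite kS /=.
    apply/fconnect_iterP; exists k.
    apply: iter_agree => i ik; rewrite ffunE.
    suff -> : (iter i f x \in S) = false by [].
    by rewrite -fibP ?itA //; first (rewrite -iterS; apply/negbTE/mmin; lia); lia.
  case: ifPn => xS //; move: (fP x).
  by rewrite inE xS /= in xAS; rewrite (negPf xAS).
- by apply/ffunP => x; rewrite !ffunE; case: (x \in S).
Qed.

Lemma fiber_card A R S (y0 : T) : [disjoint A & R] -> S \subset A ->
  #|[set f in AF A R | fib A R f == S]| = #|R| ^ #|S| * #|AF (A :\: S) S|.
Proof.
move=> dAR sA.
have -> : [set f in AF A R | fib A R f == S] =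
  (fun gh => comb S gh.1 gh.2) @: setX [set g in pffun_on y0 S R] (AF (A :\: S) S).
  apply/setP => f; apply/idP/imsetP.
    rewrite inE => /andP[fAF /eqP fS].
    have [g1 h1 e] := AF_split y0 dAR sA fAF fS.
    exists ([ffun x => if x \in S then f x else y0], [ffun x => if x \in S then x else f x]); last by rewrite e.
    by apply/setXP; split; [rewrite inE | exact: h1].
  move=> [[g h]] /setXP[]; rewrite inE => gP hP ->.
  by have [c1 c2] := comb_AF dAR sA gP hP; rewrite inE c1 c2 eqxx.
rewrite card_in_imset ?cardsX ?cardsE ?card_pffun_on //.
move=> [g1 h1] [g2 h2] /setXP[]; rewrite inE => /pffun_onP[/supportP s1 _] hA1.
move=> /setXP[]; rewrite inE => /pffun_onP[/supportP s2 _] hA2 /= e.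
have hP1 := AFP hA1; have hP2 := AFP hA2.
congr pair; apply/ffunP => x; have := congr1 (fun F : {ffun T -> T} => F x) e; rewrite !ffunE /=;
  case: ifPn => xS //.
- by rewrite s1 ?s2.
- move=> _; move: (hP1 x) (hP2 x); rewrite inE xS /= => /eqP -> /eqP -> //.
Qed.

Lemma sum_subsets A (F : nat -> nat) :
  \sum_(S : {set T} | S \subset A) F #|S| = \sum_(j < #|A|.+1) 'C(#|A|, j) * F j.
Proof.
rewrite (partition_big (fun S : {set T} => inord #|S| : 'I_(#|A|.+1)) xpredT) //=.
apply: eq_bigr => j _.
rewrite (eq_bigr (fun _ => F j)); last first.
  move=> S /andP[sA /eqP <-]; rewrite inordK // ltnS; exact: subset_leq_card.
rewrite sum_nat_const -cards_draws; congr (_ * _); apply: eq_card => S.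
rewrite !inE unfold_in /= ; case sA: (S \subset A) => //=.
have lt : #|S| < #|A|.+1 by rewrite ltnS; exact: subset_leq_card.
apply/eqP/eqP => e; first by rewrite -e inordK.
by apply: val_inj; rewrite /= -e inordK.
Qed.

Theorem AF_card A R : [disjoint A & R] -> #|AF A R| = Nf #|A| #|R|.
Proof.
have [n] := ubnP #|A|; elim: n A R => // n IH A R ltA dAR.
have [->|A0] := eqVneq A set0; first by rewrite AF0 cards0.
have e1 : #|AF A R| = \sum_(S : {set T} | S \subset A) #|[set f in AF A R | fib A R f == S]|.
  rewrite -sum1_card (partition_big (fib A R) (fun S => S \subset A)); last first.
    by move=> f _; apply/subsetP => x; rewrite inE => /andP[].
  by apply: eq_bigr => S _; rewrite sum1dep_card.
rewrite e1.
pose F j := if j == 0 then 0 else #|R| ^ j * Nf (#|A| - j) j.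
rewrite (eq_bigr (fun S => F #|S|)); last first.
  move=> S sA; rewrite /F cards_eq0.
  have [-> | S0] := eqVneq S set0.
    apply: eq_card0 => f; rewrite inE; apply/negP => /andP[fAF /eqP fS].
    by move: (fib_nonempty dAR fAF A0); rewrite fS eqxx.
  have [y0 _] := set0Pn _ S0.
  rewrite (fiber_card y0 dAR sA).
  have cD : #|A :\: S| = #|A| - #|S| by rewrite cardsD (setIidPr sA).
  rewrite IH ?cD //.
    have : 0 < #|S| by rewrite card_gt0.
    have : #|S| <= #|A| by exact: subset_leq_card.
    lia.
  by rewrite disjoint_sym disjoints_subset setCD subsetUr.
rewrite sum_subsets big_ord_recl /= /F /= muln0 add0n.
have A0' : 0 < #|A| by rewrite card_gt0.
rewrite -(Nf_rec _ A0'); apply: eq_bigr => i _.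
by rewrite /bump /= add1n mulnA.
Qed.
End AFcount.

Lemma set2_eq (T : finType) (a b c d : T) : [set a; b] = [set c; d] ->
  (a = c /\ b = d) \/ (a = d /\ b = c).
Proof.
move=> e.
have ma : a \in [set c; d] by rewrite -e !inE eqxx.
have mb : b \in [set c; d] by rewrite -e !inE eqxx orbT.
have mc : c \in [set a; b] by rewrite e !inE eqxx.
have md : d \in [set a; b] by rewrite e !inE eqxx orbT.
move: ma mb mc md; rewrite !inE => /orP[]/eqP ea /orP[]/eqP eb /orP[]/eqP ec /orP[]/eqP ed; subst; tauto.
Qed.

Section Graph.
Variable gT : finGroupType.
Variable G : {group gT}.
Local Open Scope group_scope.
Implicit Types (f g : {ffun gT -> gT}).

Lemma pg_adj_sym (x y : gT) : pg_adj x y = pg_adj y x.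
Proof. by rewrite /pg_adj eq_sym orbC. Qed.

Lemma pg_adj_irr (x : gT) : pg_adj x x = false.
Proof. by rewrite /pg_adj eqxx. Qed.

Lemma pg_adj1 (x : gT) : x != 1 -> pg_adj x 1.
Proof. by move=> x1; rewrite /pg_adj x1 cycle1 sub1G orbT. Qed.

Lemma edge_rel_sym (T : {set {set gT}}) : symmetric (edge_rel T).
Proof. by move=> u v; rewrite /edge_rel setUC. Qed.

Definition PF (A : {set gT}) := [set f : {ffun gT -> gT} | [forall x,
  if x \in A then [&& f x \in G, pg_adj x (f x) & fconnect f x 1] else f x == x]].

Lemma PFP A f : f \in PF A ->
  forall x, if x \in A then [&& f x \in G, pg_adj x (f x) & fconnect f x 1] else f x == x.
Proof. by rewrite inE => /forallP. Qed.

Definition Phi f : {set {set gT}} := [set [set x; f x] | x in G^#].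

Lemma PF1 f : f \in PF G^# -> f 1 = 1.
Proof. by move=> /PFP /(_ 1); rewrite !inE eqxx /= => /eqP. Qed.

Lemma two_cycle (f : gT -> gT) y n : f (f y) = y -> iter n f y \in [set y; f y].
Proof.
move=> e; elim: n => [|n IH] /=; first by rewrite !inE eqxx.
by move: IH; rewrite !inE => /orP[]/eqP ->; rewrite ?e eqxx ?orbT.
Qed.

Lemma Phi_inj : {in PF G^# &, injective Phi}.
Proof.
move=> f g fP gP e.
have fP' := PFP fP; have gP' := PFP gP.
have g1 := PF1 gP; have f1 := PF1 fP.
suff H : forall x, x \in G^# -> f x = g x.
  apply/ffunP => x; case xA: (x \in G^#); first exact: H.
  by move: (fP' x) (gP' x); rewrite xA => /eqP -> /eqP ->.
move=> x0 x0A; apply/eqP/negPn/negP => ne0.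
have step y : y \in G^# -> f y != g y ->
    [/\ g (f y) = y, f y \in G^# & f (f y) != g (f y)].
  move=> yA ne.
  have : [set y; f y] \in Phi g by rewrite -e; apply: imset_f.
  case/imsetP => z zA /set2_eq [[ez ezz]|[ez ezz]].
    by subst z; rewrite ezz eqxx in ne.
  have gfy : g (f y) = y by rewrite ezz.
  have fyA : f y \in G^#.
    move: (fP' y); rewrite yA => /and3P[fyG _ _]; rewrite !inE fyG andbT.
    apply/negP => /eqP fy1; move: gfy; rewrite fy1 g1 => y1.
    by move: yA; rewrite -y1 !inE eqxx.
  split=> //; rewrite gfy; apply/negP => /eqP ffy.
  move: (fP' y); rewrite yA => /and3P[_ _ /fconnect_iterP [n en]].
  have := two_cycle n ffy; rewrite en !inE => /orP[]/eqP e1.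
    by move: yA; rewrite -e1 !inE eqxx.
  by move: fyA; rewrite -e1 !inE eqxx.
have all_n n : iter n f x0 \in G^# /\ f (iter n f x0) != g (iter n f x0).
  elim: n => [|n [IHa IHb]] //=.
  by have [_ -> ->] := step _ IHa IHb.
move: (fP' x0); rewrite x0A => /and3P[_ _ /fconnect_iterP [n en]].
by have [] := all_n n; rewrite en !inE eqxx.
Qed.

Lemma dep_ex (f : gT -> gT) x : exists n, (iter n f x == 1) || ~~ fconnect f x 1.
Proof.
case c: (fconnect f x 1); last by exists 0; rewrite orbT.
by move/fconnect_iterP: c => [n en]; exists n; rewrite en eqxx.
Qed.

Definition dep (f : gT -> gT) x := ex_minn (dep_ex f x).

Lemma dep_min (f : gT -> gT) x m : iter m f x = 1 -> dep f x <= m.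
Proof.
move=> em; rewrite /dep; case: ex_minnP => n _ H; apply: H.
by rewrite em eqxx.
Qed.

Lemma dep_iter (f : gT -> gT) x : fconnect f x 1 -> iter (dep f x) f x = 1.
Proof.
move=> c; rewrite /dep; case: ex_minnP => n; rewrite c orbF => /eqP //.
Qed.

Lemma dep_lt (f : gT -> gT) x : x != 1 -> fconnect f x 1 -> dep f (f x) < dep f x.
Proof.
move=> x1 c; have := dep_iter c; case E: (dep f x) => [|k].
  by move=> /= ex; rewrite ex eqxx in x1.
by rewrite iterSr => /dep_min.
Qed.

Lemma no_cycle (e : rel gT) (d : gT -> nat) (f : gT -> gT) (s : seq gT) :
  (forall u w, e u w -> (f u = w /\ d w < d u) \/ (f w = u /\ d u < d w)) ->
  3 <= size s -> uniq s -> ~~ path.cycle e s.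
Proof.
move=> He; case: s => [//|x0 s0] sz un; set s := x0 :: s0 in sz un *.
have x0s : x0 \in s by rewrite inE eqxx.
case: (arg_maxnP d x0s) => v vs vmax.
case: (rot_to vs) => i s' es.
rewrite -(rot_cycle i) es.
have : uniq (v :: s') by rewrite -es rot_uniq.
have : 3 <= size (v :: s') by rewrite -es size_rot.
have ins y : y \in v :: s' -> d y <= d v by rewrite -es mem_rot => /vmax.
move: ins; clear es; case: s' => [|a [|c t]] //= ins _ /andP[_ /andP[ant _]].
apply/negP => H; move/and3P: H => [eva _]; rewrite rcons_path => /andP[_ ebv].
set b := last c t in ebv.
have bt : b \in c :: t by rewrite /b mem_last.
have fva : f v = a.
  case: (He _ _ eva) => [[] //|[_ lt]].
  by have := ins a; rewrite !inE eqxx orbT => /(_ isT); rewrite leqNgt lt.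
have fvb : f v = b.
  case: (He _ _ ebv) => [[_ lt]|[] //].
  have bin : b \in [:: v, a, c & t] by rewrite (in_cons v) (in_cons a) bt !orbT.
  by have := ins b bin; rewrite leqNgt lt.
by rewrite -fva fvb bt in ant.
Qed.

Lemma Phi_st f : f \in PF G^# -> pg_spanning_tree G (Phi f).
Proof.
move=> fP; have fP' := PFP fP; have f1 := PF1 fP.
apply/and3P; split.
- apply/subsetP => _ /imsetP[x xA ->].
  move: (fP' x); rewrite xA => /and3P[fxG adj _].
  apply/imset2P; exists x (f x) => //; first by move: xA; rewrite !inE => /andP[].
  by rewrite inE fxG adj.
- have step z : connect (edge_rel (Phi f)) z (f z).
    case zA: (z \in G^#).
      by apply: connect1; rewrite /edge_rel; apply: imset_f.
    by move: (fP' z); rewrite zA => /eqP ->; exact: connect0.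
  have c1 x : x \in G -> connect (edge_rel (Phi f)) x 1.
    move=> xG; case: (eqVneq x 1) => [->|x1]; first exact: connect0.
    have xA : x \in G^# by rewrite !inE x1.
    move: (fP' x); rewrite xA => /and3P[_ _ /fconnect_iterP [n <-]].
    elim: n => [|n IH] /=; first exact: connect0.
    exact: connect_trans IH (step _).
  apply/forallP => x; apply/implyP => xG; apply/forallP => y; apply/implyP => yG.
  apply: connect_trans (c1 x xG) _.
  by rewrite (sym_connect_sym (@edge_rel_sym (Phi f))); exact: c1.
- apply/forallP => n; apply/forallP => s; apply/implyP => n3.
  rewrite /ucycleb negb_and; case un: (uniq s); last by rewrite orbT.
  rewrite orbF; apply: (@no_cycle _ (dep f) f) => //; last by rewrite size_tuple.
  move=> u w /imsetP[z zA ez]; case: (set2_eq ez) => [[-> ->]|[-> ->]].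
    left; split => //; apply: dep_lt; first by move: zA; rewrite !inE => /andP[].
    by move: (fP' z); rewrite zA => /and3P[].
  right; split => //; apply: dep_lt; first by move: zA; rewrite !inE => /andP[].
  by move: (fP' z); rewrite zA => /and3P[].
Qed.

Section Surj.
Variable T : {set {set gT}}.
Hypothesis stT : pg_spanning_tree G T.

Let e := edge_rel T.

Lemma edgeG x y : e x y -> [/\ x \in G, y \in G & pg_adj x y].
Proof.
case/and3P: stT => /subsetP sub _ _ exy.
case/imset2P: (sub _ exy) => a b aG; rewrite inE => /andP[bG adj] /set2_eq [[-> ->]|[-> ->]] //.
by rewrite pg_adj_sym.
Qed.

Lemma connG x y : x \in G -> y \in G -> connect e x y.
Proof. by case/and3P: stT => _ /forallP c _ xG yG; move/(_ x): c; rewrite xG => /forallP /(_ y); rewrite yG. Qed.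

Lemma dist_ex x : exists n, [exists s : n.-tuple gT, path e x s && (last x s == 1)] || ~~ connect e x 1.
Proof.
case c: (connect e x 1); last by exists 0; rewrite orbT.
case/connectP: c => p pp lp; exists (size p); apply/orP; left; apply/existsP.
by exists (in_tuple p); rewrite /= pp -lp eqxx.
Qed.

Definition dist x := ex_minn (dist_ex x).

Lemma dist_min x (s : seq gT) : path e x s -> last x s = 1 -> dist x <= size s.
Proof.
move=> ps ls; rewrite /dist; case: ex_minnP => n _ H; apply: H; apply/orP; left.
by apply/existsP; exists (in_tuple s); rewrite /= ps ls eqxx.
Qed.

Lemma dist_path x : connect e x 1 -> exists s : seq gT, [/\ path e x s, last x s = 1 & size s = dist x].
Proof.
move=> c; rewrite /dist; case: ex_minnP => n; rewrite c orbF => /existsP[s /andP[ps /eqP ls]] _.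
by exists s; rewrite size_tuple.
Qed.

Lemma dist_step x : x \in G -> x != 1 -> exists y, e x y && (dist y < dist x).
Proof.
move=> xG x1; have [s [ps ls ss]] := dist_path (connG xG (group1 G)).
case: s ps ls ss => [|y s'] /=; first by move=> _ ex; rewrite ex eqxx in x1.
move=> /andP[exy ps'] ls <-; exists y; rewrite exy /=.
by rewrite ltnS; apply: dist_min.
Qed.

Definition fT := [ffun x => if x \in G^# then odflt x [pick y | e x y && (dist y < dist x)] else x].

Lemma fT_step x : x \in G^# -> e x (fT x) && (dist (fT x) < dist x).
Proof.
move=> xA; rewrite ffunE xA; case: pickP => [y //|none].
move: xA; rewrite !inE => /andP[x1 xG]; have [y] := dist_step xG x1.
by rewrite none.
Qed.

Lemma fT_PF : fT \in PF G^#.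
Proof.
have fc : forall n x, x \in G -> dist x < n -> fconnect fT x 1.
  elim=> // n IH x xG dn; case: (eqVneq x 1) => [->|x1]; first exact: connect0.
  have xA : x \in G^# by rewrite !inE x1.
  case/andP: (fT_step xA) => efx dfx.
  have [_ fxG _] := edgeG efx.
  apply: connect_trans (fconnect1 _ _) (IH _ fxG _); lia.
rewrite inE; apply/forallP => x; case: ifPn => xA; last by rewrite ffunE (negPf xA).
case/andP: (fT_step xA) => efx _; have [xG fxG adj] := edgeG efx.
by rewrite fxG adj (fc (dist x).+1).
Qed.

Lemma Phi_fT : Phi fT = T.
Proof.
have fP' := PFP fT_PF.
apply/eqP; rewrite eqEsubset; apply/andP; split.
  by apply/subsetP => _ /imsetP[x xA ->]; case/andP: (fT_step xA).
apply/subsetP => E ET.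
case/and3P: stT => /subsetP sub _ /forallP acyc.
case/imset2P: (sub _ ET) => u w uG; rewrite inE => /andP[wG adj] eE.
have uw : u != w by move: adj; rewrite /pg_adj => /andP[].
case: (boolP [exists x in G^#, E == [set x; fT x]]) => [/existsP[x /andP[xA /eqP ->]]|none].
  exact: imset_f.
exfalso.
have noE z : z \in G^# -> [set z; fT z] != E.
  move=> zA; apply/negP => /eqP ez; move/existsP: none; apply; exists z; rewrite zA ez eqxx.
  done.
set T' := T :\ E.
have sub' : Phi fT \subset T'.
  apply/subsetP => _ /imsetP[z zA ->]; rewrite !inE noE //=.
  by case/andP: (fT_step zA).
have cT' : connect (edge_rel T') u w.
  case/and3P: (Phi_st fT_PF) => _ /forallP /(_ u) /implyP /(_ uG) /forallP /(_ w) /implyP /(_ wG) c _.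
  apply: connect_sub c => a b ab; apply: connect1; exact: (subsetP sub').
case/connectP: cT' => p pp lp.
move: lp; case: (shortenP pp) => p' pp' up' _ lp'.
have Ep : forall a b, edge_rel T' a b -> e a b by move=> a b; rewrite /edge_rel inE => /andP[].
case: p' pp' up' lp' => [|a [|b q]] pp' up' lp'.
- by rewrite /= in lp'; rewrite lp' eqxx in uw.
- rewrite /= in lp'; subst a; move: pp' => /= /andP[].
  by rewrite /edge_rel /T' !inE -eE eqxx.
set s := [:: u, a, b & q].
have us : uniq s by [].
have szs : size s < #|gT|.+1 by rewrite ltnS -(card_uniqP us); exact: max_card.
move: (acyc (Ordinal szs)) => /forallP /(_ (in_tuple s)) /implyP /(_ isT).
have pT : path e u [:: a, b & q] := sub_path Ep pp'.
have cyc : path.cycle e s.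
  rewrite /path.cycle /s -/(path e u (rcons [:: a, b & q] u)) rcons_path pT /=; rewrite /= in lp'; rewrite -lp'.
  by rewrite /e /edge_rel setUC -eE.
by rewrite /ucycleb us andbT cyc.
Qed.

End Surj.

Lemma kappa_PF : kappa G = #|PF G^#|.
Proof.
rewrite /kappa -(card_in_imset Phi_inj); apply: eq_card => T.
rewrite inE; apply/idP/imsetP => [stT | [f fP ->]]; last exact: Phi_st.
by exists (fT T); [exact: fT_PF | rewrite Phi_fT].
Qed.
End Graph.

Lemma agree_fconnect (T : finType) (f g : T -> T) x y :
  (forall i, f (iter i g x) = g (iter i g x)) -> fconnect g x y -> fconnect f x y.
Proof.
move=> H /fconnect_iterP[n <-]; apply/fconnect_iterP; exists n.
by apply: iter_agree => i _; apply: H.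
Qed.

Section Count.
Variables (gT : finGroupType) (G : {group gT}).
Local Open Scope group_scope.
Implicit Types (A B C : {set gT}) (f : {ffun gT -> gT}).

Definition closedA (A : {set gT}) := A \subset G^# /\
  (forall x y, x \in A -> y \in G^# -> pg_adj x y -> y \in A).

Lemma PF_out A f x : f \in PF G A -> x \notin A -> f x = x.
Proof. by move=> /PFP /(_ x) H xA; move: H; rewrite (negPf xA) => /eqP. Qed.

Lemma PF_1 A f : A \subset G^# -> f \in PF G A -> f 1 = 1.
Proof.
move=> sA fP; apply: (PF_out fP); apply/negP => /(subsetP sA).
by rewrite !inE eqxx.
Qed.

Lemma stay A C f : A \subset G^# -> f \in PF G A -> C \subset A -> closedA C ->
  forall x n, x \in 1 |: C -> iter n f x \in 1 |: C.
Proof.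
move=> sA fP sC [_ clC] x n; elim: n => // n IH /IH; set y := iter n f x.
rewrite /= -/y !inE => /orP[/eqP ->|yC]; first by rewrite (PF_1 sA fP) eqxx.
move: (PFP fP y); rewrite (subsetP sC y yC) => /and3P[fyG adj _].
case: (eqVneq (f y) 1) => //= fy1; apply: clC adj => //.
by rewrite !inE fy1.
Qed.

Lemma PF_restr A C f : A \subset G^# -> closedA C -> C \subset A -> f \in PF G A ->
  [ffun x => if x \in C then f x else x] \in PF G C.
Proof.
move=> sA clC sC fP; rewrite inE; apply/forallP => x; rewrite ffunE.
case xC: (x \in C) => //; move: (PFP fP x); rewrite (subsetP sC x xC) => /and3P[-> -> c] /=.
apply: agree_fconnect c => i.
have x1 : x \in 1 |: C by rewrite in_setU1 xC orbT.
have := stay sA fP sC clC i x1; rewrite in_setU1.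
case/orP => [/eqP ->|yC]; rewrite ffunE ?yC //.
have n1 : (1 : gT) \notin C by apply/negP => /(subsetP (proj1 clC)); rewrite !inE eqxx.
by rewrite (negPf n1) (PF_1 sA fP).
Qed.

Lemma PF_prod A B : closedA A -> closedA B -> B \subset A -> closedA (A :\: B) ->
  #|PF G A| = (#|PF G B| * #|PF G (A :\: B)|)%N.
Proof.
move=> clA clB sB clA'; set A' := A :\: B.
have sA := proj1 clA; have sA' : A' \subset A by apply: subsetDl.
have sBG := proj1 clB; have sA'G := proj1 clA'.
have n1B : (1 : gT) \notin B by apply/negP => /(subsetP sBG); rewrite !inE eqxx.
have n1A' : (1 : gT) \notin A' by apply/negP => /(subsetP sA'G); rewrite !inE eqxx.
pose cmb (fg : {ffun gT -> gT} * {ffun gT -> gT}) := [ffun x => if x \in B then fg.1 x else fg.2 x].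
have -> : PF G A = cmb @: setX (PF G B) (PF G A').
  apply/setP => f; apply/idP/imsetP => [fP | [[f1 f2] /setXP[/= f1P f2P] ->]].
    exists ([ffun x => if x \in B then f x else x], [ffun x => if x \in A' then f x else x]).
      apply/setXP; split; [exact: (PF_restr sA clB sB fP) | exact: (PF_restr sA clA' sA' fP)].
    apply/ffunP => x; rewrite !ffunE /=; case xB: (x \in B) => //; case xA': (x \in A') => //.
    apply: (PF_out fP); apply/negP => xA; move: xA'; rewrite inE xB xA.
    done.
  rewrite inE; apply/forallP => x; rewrite ffunE /=.
  have [xB|xB] := boolP (x \in B).
    rewrite (subsetP sB x xB); move: (PFP f1P x); rewrite xB => /and3P[-> -> c] /=.
    apply: agree_fconnect c => i.
    have x1 : x \in 1 |: B by rewrite in_setU1 xB orbT.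
    have := stay sBG f1P (subxx B) clB i x1; rewrite in_setU1.
    case/orP => [/eqP ->|yC]; rewrite ffunE ?yC //=.
    by rewrite (negPf n1B) (PF_1 sBG f1P) (PF_1 sA'G f2P).
  case: ifPn => xA; last by apply/eqP; apply: (PF_out f2P); rewrite inE (negPf xA) andbF.
  have xA' : x \in A' by rewrite inE xB xA.
  move: (PFP f2P x); rewrite xA' => /and3P[-> -> c] /=.
  apply: agree_fconnect c => i.
  have x1 : x \in 1 |: A' by rewrite in_setU1 xA' orbT.
  have := stay sA'G f2P (subxx A') clA' i x1; rewrite in_setU1.
  case/orP => [/eqP ->|yA']; rewrite ffunE /=; first by rewrite (negPf n1B).
  by move: yA'; rewrite inE => /andP[/negPf ->].
rewrite card_in_imset ?cardsX //.
move=> [f1 f2] [g1 g2] /setXP[/= f1P f2P] /setXP[/= g1P g2P] e.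
congr pair; apply/ffunP => x; have := congr1 (fun F : {ffun gT -> gT} => F x) e; rewrite !ffunE /=;
  case: ifPn => xB // _.
- by rewrite (PF_out f1P xB) (PF_out g1P xB).
- have xA' : x \notin A' by rewrite inE xB.
  by rewrite (PF_out f2P xA') (PF_out g2P xA').
Qed.

End Count.

Section Final.
Variables (gT : finGroupType) (G : {group gT}) (p : nat).
Local Open Scope group_scope.
Hypotheses (pr : prime p) (pG : p.-group G) (cl : components_are_cliques G).
Implicit Types (A B C : {set gT}) (f : {ffun gT -> gT}).

Lemma pgstar_sym : symmetric (pgstar_adj G).
Proof.
move=> x y; rewrite /pgstar_adj pg_adj_sym.
by case: (x \in G^#); case: (y \in G^#).
Qed.

Lemma block x : x \in G^# -> exists w, [/\ w \in G, x \in <[w]>, closedA G (<[w]> :\ 1) &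
  forall x' y, x' \in <[w]> :\ 1 -> (y \in G) && pg_adj x' y = (y \in <[w]>) && (y != x')].
Proof.
move=> xA.
set K := [set y in G^# | connect (pgstar_adj G) x y].
have xK : x \in K by rewrite inE xA connect0.
have csym := sym_connect_sym pgstar_sym.
have F1 y z : y \in K -> z \in K -> y != z -> pg_adj y z.
  rewrite inE => /andP[yA cy]; rewrite inE => /andP[zA cz] yz; apply: cl => //.
  by apply: connect_trans _ cz; rewrite csym.
case: (arg_maxnP (fun y => #[y]) xK) => w wK0 wmax0.
have wK : w \in K := wK0.
have wmax : forall j, j \in K -> #[j] <= #[w] := wmax0.
have wG : w \in G by move: wK; rewrite !inE => /andP[/andP[]].
have sw : <[w]> \subset G by rewrite cycle_subG.
have F2 y : y \in K -> y \in <[w]>.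
  move=> yK; case: (eqVneq y w) => [->|yw]; first exact: cycle_id.
  have := F1 _ _ yK wK yw; rewrite /pg_adj yw /= => /orP[sub|sub].
    by rewrite -cycle_subG.
  have : <[w]> == <[y]> by rewrite eqEcard sub /= -!orderE wmax.
  by move/eqP ->; exact: cycle_id.
have F3 z : z \in <[w]> -> z != 1 -> z \in K.
  move=> zw z1; have zG : z \in G := subsetP sw z zw.
  case: (eqVneq z w) => [->//|zw'].
  rewrite inE !inE z1 zG /=.
  move: wK; rewrite inE => /andP[wA cw].
  apply: connect_trans cw (connect1 _).
  rewrite /pgstar_adj wA !inE z1 zG /= /pg_adj eq_sym zw' /=.
  by rewrite [X in _ || X]cycle_subG zw orbT.
have KB : K = <[w]> :\ 1.
  apply/setP => y; apply/idP/idP => [yK|].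
    rewrite in_setD1 F2 // andbT; by move: yK; rewrite !inE => /andP[/andP[]].
  by rewrite in_setD1 => /andP[y1 yw]; apply: F3.
exists w; split => //; first exact: F2.
  rewrite -KB; split; first by apply/subsetP => y; rewrite inE => /andP[].
  move=> y z; rewrite inE => /andP[yA cy] zA adj; rewrite inE zA /=.
  by apply: connect_trans cy (connect1 _); rewrite /pgstar_adj yA zA.
rewrite -KB => x' y x'K.
have x'A : x' \in G^# by move: x'K; rewrite inE => /andP[].
have x'1 : x' != 1 by move: x'A; rewrite !inE => /andP[].
apply/andP/andP => [[yG adj]|[yw yx]].
  case: (eqVneq y 1) => [->|y1].
    by rewrite group1 eq_sym.
  have yA : y \in G^# by rewrite !inE y1.
  have yK : y \in K.
    move: x'K; rewrite inE => /andP[_ cx]; rewrite inE yA.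
    by apply: connect_trans cx (connect1 _); rewrite /pgstar_adj x'A yA.
  split; first exact: F2.
  by apply/negP => /eqP e; rewrite e pg_adj_irr in adj.
split; first exact: subsetP sw y yw.
case: (eqVneq y 1) => [->|y1]; first exact: pg_adj1.
by apply: F1 => //; [exact: F3 | rewrite eq_sym].
Qed.

Lemma PF_block w : w \in G ->
  (forall x' y, x' \in <[w]> :\ 1 -> (y \in G) && pg_adj x' y = (y \in <[w]>) && (y != x')) ->
  #|PF G (<[w]> :\ 1)| = (#[w] ^ (#[w] - 2))%N.
Proof.
move=> wG adjw; set B := <[w]> :\ 1.
have -> : PF G B = AF B [set 1].
  apply/setP => f; rewrite !inE; apply/forallP/forallP => H x; move: (H x); case: ifPn => // xB.
    rewrite andbA adjw // => /andP[/andP[fxw fxx] c].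
    apply/andP; split; first by rewrite in_setU in_setD1 in_set1 fxw andbT orNb.
    by apply/existsP; exists 1; rewrite in_set1 eqxx c.
  move=> /andP[fxB /existsP[y /andP[]]]; rewrite inE => /eqP -> c.
  rewrite andbA adjw // c andbT.
  have fxw : f x \in <[w]>.
    by move: fxB; rewrite in_setU in_setD1 in_set1 => /orP[/andP[]|/eqP ->] //; rewrite group1.
  rewrite fxw /=; apply/negP => /eqP fxx.
  move/fconnect_iterP: c => [n].
  have -> : iter n f x = x by elim: n => //= n ->.
  by move=> x1; move: xB; rewrite x1 !inE eqxx.
rewrite AF_card; last by rewrite disjoints_subset; apply/subsetP => y; rewrite !inE => /andP[].
rewrite cards1.
have ew : #[w] = #|B|.+1.
  by have := cardsD1 1 <[w]>; rewrite group1 -orderE /B /= add1n.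
rewrite ew /Nf; case: #|B| => [|m] //=.
by rewrite mul1n addn1 subn2.
Qed.

Lemma pow_p w : w \in G -> exists a, #[w] = (p ^ a)%N.
Proof.
move=> wG; have := mem_p_elt pG wG; rewrite /p_elt => /p_natP [a ->].
by exists a.
Qed.

Lemma PF_count A : closedA G A ->
  exists k, #|PF G A| = (p ^ k)%N /\ ((exists2 x, x \in A & 2 < #[x]) -> 0 < k).
Proof.
have [n] := ubnP #|A|; elim: n A => // n IH A ltA clA.
have [->|A0] := eqVneq A set0.
  exists 0; split; last by case=> x; rewrite inE.
  apply/eqP/cards1P; exists [ffun x => x]; apply/setP => f; rewrite !inE.
  apply/forallP/eqP => [H | -> x]; last by rewrite inE ffunE.
  by apply/ffunP => x; move: (H x); rewrite inE ffunE => /eqP.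
case/set0Pn: A0 => x xA.
have xG : x \in G^# := subsetP (proj1 clA) x xA.
have [w [wG xw clB adjw]] := block xG.
set B := <[w]> :\ 1 in clB adjw.
have x1 : x != 1 by move: xG; rewrite in_setD1 => /andP[].
have xB : x \in B by rewrite /B in_setD1 x1 xw.
have sB : B \subset A.
  apply/subsetP => y yB; case: (eqVneq y x) => [-> //|yx].
  have := adjw x y xB; rewrite yx andbT.
  move: yB; rewrite /B in_setD1 => /andP[y1 yw].
  rewrite yw => /andP[yG adj].
  by apply: (proj2 clA) xA _ adj; rewrite in_setD1 y1 yG.
have clA' : closedA G (A :\: B).
  split; first by apply: subset_trans (subsetDl _ _) (proj1 clA).
  move=> y z; rewrite inE => /andP[yB yA] zA adj; rewrite inE (proj2 clA y z yA zA adj) andbT.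
  apply/negP => zB; move/negP: yB; apply; apply: (proj2 clB) zB _ _ => //.
    exact: subsetP (proj1 clA) y yA.
  by rewrite pg_adj_sym.
have ltA' : #|A :\: B| < n.
  have : #|A :\: B| < #|A|.
    apply: proper_card; rewrite properE subsetDl /=; apply/subsetPn; exists x => //.
    by rewrite inE xB.
  lia.
have [k' [ek' pk']] := IH _ ltA' clA'.
have [a ea] := pow_p wG.
exists (a * (p ^ a - 2) + k')%N; split.
  by rewrite (PF_prod clA clB sB clA') (PF_block wG adjw) ek' ea -expnM expnD.
case=> z zA z2.
case zB: (z \in B).
  have : #[z] <= #[w].
    apply: subset_leq_card; rewrite cycle_subG.
    by move: zB; rewrite inE => /andP[].
  rewrite ea => le.
  have pa : 2 < p ^ a by lia.
  have a0 : 0 < a by case: a {ea le} pa => //; rewrite expn0.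
  rewrite addn_gt0 muln_gt0 a0 /=; apply/orP; left; lia.
have k0 : 0 < k' by apply: pk'; exists z => //; rewrite inE zB zA.
by rewrite addn_gt0 k0 orbT.
Qed.
End Final.

Theorem corollary3p4 (gT : finGroupType) (G : {group gT}) (p : nat) :
  prime p -> (p.-group G)%g ->
  (exists x, x \in G /\ 2 < #[x]%g) ->
  components_are_cliques G ->
  primes (kappa G) = [:: p].
Proof.
move=> pr pG [x [xG x2]] cl.
have clG : closedA G (G^#)%g.
  by split => // y z _ zA _.
have [k [ek pk]] := PF_count pr pG cl clG.
have k0 : 0 < k.
  apply: pk; exists x => //; rewrite !inE xG andbT.
  by apply/negP => /eqP x1; rewrite x1 order1 in x2.
by rewrite kappa_PF ek primesX // primes_prime.
Qed.
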